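(* Let $E$ be a finite set and $\tau:2^E\to 2^E$. If $(E,\tau)$ is a violator space, then for every $X\subseteq E$, $ex(X)=\bigcap\{B\subseteq X:\tau(B)=\tau(X)\}$. If $(E,\tau)$ is a convex space, then for every $X\subseteq E$, $ex(X)\subseteq\bigcap\{B\subseteq X:\tau(B)=\tau(X)\}$.
   Context: $(E,\tau)$ is a violator space if (C1) $Y\subseteq\tau(Y)$ for all $Y$, and (C22) $F\subseteq G\subseteq\tau(F)$ implies $\tau(G)=\tau(F)$. $(E,\tau)$ is a convex space if (C1) holds and (convexity) for all $Y_1\subseteq Y_2\subseteq Y_3\subseteq E$ with $\tau(Y_1)=\tau(Y_3)$ we have $\tau(Y_2)=\tau(Y_1)$. An element $x\in X$ is an extreme point of $X$ if $x\notin\tau(X-\{x\})$; $ex(X)$ is the set of extreme points of $X$. *)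

(* Defs.v *)
From mathcomp Require Import all_boot.
Set Implicit Arguments. Unset Strict Implicit. Unset Printing Implicit Defensive.

Definition extensive (E : finType) (tau : {set E} -> {set E}) : Prop :=
  forall Y : {set E}, Y \subset tau Y.

Definition C22 (E : finType) (tau : {set E} -> {set E}) : Prop :=
  forall F G : {set E}, F \subset G -> G \subset tau F -> tau G = tau F.

Definition violator_space (E : finType) (tau : {set E} -> {set E}) : Prop :=
  extensive tau /\ C22 tau.

Definition convexity (E : finType) (tau : {set E} -> {set E}) : Prop :=
  forall Y1 Y2 Y3 : {set E}, Y1 \subset Y2 -> Y2 \subset Y3 ->
    tau Y1 = tau Y3 -> tau Y2 = tau Y1.

Definition convex_space (E : finType) (tau : {set E} -> {set E}) : Prop :=
  extensive tau /\ convexity tau.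

Definition ex (E : finType) (tau : {set E} -> {set E}) (X : {set E}) : {set E} :=
  [set x in X | x \notin tau (X :\ x)].

Definition bases_cap (E : finType) (tau : {set E} -> {set E}) (X : {set E}) : {set E} :=
  \bigcap_(B : {set E} | (B \subset X) && (tau B == tau X)) B.

(* Main.v *)
Require Import Defs.
From mathcomp Require Import all_boot.

Lemma ex_sub_gen (E : finType) (tau : {set E} -> {set E}) (X : {set E}) :
  extensive tau ->
  (forall (B : {set E}) (x : E), B \subset X -> tau B = tau X -> x \in X -> x \notin B ->
     tau (X :\ x) = tau X) ->
  ex tau X \subset bases_cap tau X.
Proof.
move=> ext H; apply/subsetP => x; rewrite inE => /andP [xX xn].
apply/bigcapP => B /andP [BX /eqP tB].
apply/negPn/negP => xB.
move: xn; rewrite (H B x BX tB xX xB) => /negP; apply.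
exact: (subsetP (ext X)).
Qed.

Theorem mainTheorem13 (E : finType) (tau : {set E} -> {set E}) :
  (violator_space tau -> forall X : {set E}, ex tau X = bases_cap tau X) /\
  (convex_space tau -> forall X : {set E}, ex tau X \subset bases_cap tau X).
Proof.
split.
- move=> [ext c22] X; apply/eqP; rewrite eqEsubset; apply/andP; split.
  + apply: ex_sub_gen => // B x BX tB xX xB.
    have BXx : B \subset X :\ x.
      apply/subsetP => y yB; rewrite in_setD1 (subsetP BX) // andbT.
      by apply/eqP => e; move: xB; rewrite -e yB.
    rewrite -tB; apply: c22 => //.
    apply: subset_trans (subsetDl X [set x]) _.
    rewrite tB; exact: ext.
  + apply/subsetP => x /bigcapP Hx.
    have xX : x \in X by apply: Hx; rewrite subxx eqxx.
    rewrite inE xX /=; apply/negP => xt.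
    have e : tau X = tau (X :\ x).
      apply: c22; first exact: subsetDl.
      apply/subsetP => y yX; case: (eqVneq y x) => [->//|ne].
      apply: (subsetP (ext _)); by rewrite in_setD1 ne.
    have := Hx (X :\ x); rewrite subsetDl e eqxx => /(_ isT).
    by rewrite in_setD1 eqxx.
- move=> [ext cv] X; apply: ex_sub_gen => // B x BX tB xX xB.
  have BXx : B \subset X :\ x.
    apply/subsetP => y yB; rewrite in_setD1 (subsetP BX) // andbT.
    by apply/eqP => e; move: xB; rewrite -e yB.
  rewrite (cv B (X :\ x) X) //; exact: subsetDl.
Qed.
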